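(* Let $D=\sum_{\rho\in\Sigma}n_\rho D_\rho$ and $\Pi\subseteq\Sigma$. Then the set $C^{ss}_\Pi$ is nonempty if and only if the set $C^s_\Pi$ is nonempty.
   Context: $N\cong\mathbb{Z}^d$, $M=\operatorname{Hom}(N,\mathbb{Z})$, $M_\mathbb{R}=M\otimes\mathbb{R}$, $\sigma\subset N_\mathbb{R}$ a strongly convex rational polyhedral cone of dimension $d$, $\Sigma=\sigma(1)$ its set of rays with primitive generators $n(\rho)$, $(n_\rho)\in\mathbb{Z}^\Sigma$. $C^{ss}_\Pi=\{m\in M_\mathbb{R}:\langle m,n(\rho)\rangle<-n_\rho\ (\rho\in\Pi),\ \langle m,n(\rho)\rangle\ge-n_\rho\ (\rho\in\Sigma\setminus\Pi)\}$ and $C^s_\Pi$ is defined by the same inequalities with all inequalities strict ($>$ for $\rho\in\Sigma\setminus\Pi$). *)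

(* Defs.v *)
(* N = Z^d (integer vectors 'I_d -> int), M_R = N_R = R^d
   (real vectors 'I_d -> R) with the standard pairing. *)
From HB Require Import structures.
From mathcomp Require Import all_boot all_order all_algebra.
From mathcomp Require Import reals.
Set Implicit Arguments. Unset Strict Implicit. Unset Printing Implicit Defensive.
Import Order.TTheory GRing.Theory Num.Theory.
Local Open Scope ring_scope.

Section Cones.
Variables (R : realType) (d : nat).

Definition pairing (m x : 'I_d -> R) : R := \sum_(i < d) m i * x i.

Definition realvec (w : 'I_d -> int) : 'I_d -> R := fun i => (w i)%:~R.

Definition cone_gen (p : nat) (g : 'I_p -> 'I_d -> int) (x : 'I_d -> R) : Prop :=
  exists c : 'I_p -> R, (forall j, 0 <= c j) /\
    forall i, x i = \sum_(j < p) c j * (g j i)%:~R.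

Definition strongly_convex (sigma : ('I_d -> R) -> Prop) : Prop :=
  forall x, sigma x -> sigma (fun i => - x i) -> forall i, x i = 0.

Definition full_dim (p : nat) (g : 'I_p -> 'I_d -> int) : Prop :=
  forall x : 'I_d -> R, exists c : 'I_p -> R,
    forall i, x i = \sum_(j < p) c j * (g j i)%:~R.

Definition spans_ray (sigma : ('I_d -> R) -> Prop) (w : 'I_d -> R) : Prop :=
  (exists i, w i != 0) /\
  exists m : 'I_d -> R, (forall x, sigma x -> 0 <= pairing m x) /\
    forall x, (sigma x /\ pairing m x = 0) <-> exists t, 0 <= t /\ forall i, x i = t * w i.

Definition primitive (w : 'I_d -> int) : Prop :=
  forall c : int, (forall i, (c %| w i)%Z) -> `|c| = 1.

(* C^ss_Pi and C^s_Pi for rays indexed by 'I_k with primitive generators u *)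
Definition Css (k : nat) (u : 'I_k -> 'I_d -> int) (n : 'I_k -> int)
  (Pi : {set 'I_k}) (m : 'I_d -> R) : Prop :=
  forall rho : 'I_k,
    if rho \in Pi then pairing m (realvec (u rho)) < - (n rho)%:~R
    else - (n rho)%:~R <= pairing m (realvec (u rho)).

Definition Cs (k : nat) (u : 'I_k -> 'I_d -> int) (n : 'I_k -> int)
  (Pi : {set 'I_k}) (m : 'I_d -> R) : Prop :=
  forall rho : 'I_k,
    if rho \in Pi then pairing m (realvec (u rho)) < - (n rho)%:~R
    else - (n rho)%:~R < pairing m (realvec (u rho)).

End Cones.

(* Main.v *)
Require Import Defs.
From HB Require Import structures.
From mathcomp Require Import all_boot all_order all_algebra.
From mathcomp Require Import reals ring lra.
Import Order.TTheory GRing.Theory Num.Theory.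
Local Open Scope ring_scope.

Lemma prim_int (d : nat) (w w' : 'I_d -> int) (i : 'I_d) :
  primitive w -> primitive w' -> w i != 0 -> 0 < w' i * w i ->
  (forall j, w' j * w i = w' i * w j) -> forall j, w' j = w j.
Proof.
move=> pw pw' wi0 pos E.
set a := w' i in pos E *; set b := w i in wi0 pos E *.
set g := gcdz a b.
have g0 : g != 0 by rewrite gcdz_eq0 negb_and wi0 orbT.
set a' := (a %/ g)%Z; set b' := (b %/ g)%Z.
have ha : a = a' * g by rewrite divzK // dvdz_gcdl.
have hb : b = b' * g by rewrite divzK // dvdz_gcdr.
have gpos : `|g|%:Z = g by [].
have cop : coprimez a' b'.
  suff : gcdz a' b' = 1 by rewrite coprimezE /coprime => -[->].
  apply: (mulIf g0).
  rewrite mul1r -[in LHS]gpos mulz_gcdl -ha -hb.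
  by [].
have E' : forall j, w' j * b' = a' * w j.
  move=> j; apply: (mulIf g0); rewrite -mulrA -hb mulrAC -ha; exact: E.
have hb1 : `|b'| = 1.
  apply: pw => j; rewrite -(@Gauss_dvdzr b' a'); last by rewrite coprimez_sym.
  rewrite -E'; exact: dvdz_mull (dvdzz _).
have ha1 : `|a'| = 1.
  apply: pw' => j; rewrite -(@Gauss_dvdzl a' _ b') // E'.
  exact: dvdz_mulr (dvdzz _).
have hab : a' * b' = 1.
  have p0 : 0 < a' * b'.
    have g2 : 0 < g * g by apply: mulr_gt0; rewrite lt_def g0.
    move: pos; rewrite ha hb mulrACA => h.
    by rewrite pmulr_lgt0 in h.
  by rewrite -(gtr0_norm p0) normrM ha1 hb1 mulr1.
have hbb : b' * b' = 1.
  by rewrite -expr2 -real_normK ?num_real // hb1 expr1n.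
move=> j; rewrite -[w' j]mulr1 -hbb mulrA E' mulrAC hab mul1r //.
Qed.
From Stdlib Require Import ClassicalEpsilon.

Section Main.
Variables (R : realType) (d : nat).

Lemma pairingD (m1 m2 x : 'I_d -> R) :
  pairing (fun i => m1 i + m2 i) x = pairing m1 x + pairing m2 x.
Proof. by rewrite /pairing -big_split; apply: eq_bigr => i _; rewrite mulrDl. Qed.

Lemma pairingZ c (m x : 'I_d -> R) :
  pairing (fun i => c * m i) x = c * pairing m x.
Proof. by rewrite /pairing mulr_sumr; apply: eq_bigr => i _; rewrite mulrA. Qed.

Lemma pairing_sum k (F : 'I_k -> 'I_d -> R) x :
  pairing (fun i => \sum_(r < k) F r i) x = \sum_(r < k) pairing (F r) x.
Proof.
rewrite /pairing (exchange_big) /=; apply: eq_bigr => i _.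
by rewrite mulr_suml.
Qed.

Lemma pairing_self (w : 'I_d -> R) i : w i != 0 -> 0 < pairing w w.
Proof.
move=> wi; rewrite /pairing (bigD1 i) //=.
have h1 : 0 < w i * w i by rewrite -expr2 exprn_even_gt0.
have h2 : 0 <= \sum_(j < d | j != i) w j * w j.
  by apply: sumr_ge0 => j _; rewrite -expr2 sqr_ge0.
lra.
Qed.

End Main.

From Stdlib Require Import FunctionalExtensionality.

Theorem mainTheorem5 (R : realType) (d p k : nat)
  (g : 'I_p -> 'I_d -> int) (u : 'I_k -> 'I_d -> int)
  (nr : 'I_k -> int) (Pi : {set 'I_k}) :
  strongly_convex (@cone_gen R d p g) ->
  @full_dim R d p g ->
  injective u ->
  (forall rho, primitive (u rho) /\ spans_ray (@cone_gen R d p g) (@realvec R d (u rho))) ->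
  (forall w : 'I_d -> R, spans_ray (@cone_gen R d p g) w ->
     exists rho, exists t : R, 0 < t /\ forall i, w i = t * @realvec R d (u rho) i) ->
  (exists m : 'I_d -> R, @Css R d k u nr Pi m) <-> (exists m : 'I_d -> R, @Cs R d k u nr Pi m).
Proof.
move=> _ _ uinj H2 _.
set sigma := @cone_gen R d p g.
pose mm rho := proj1_sig (constructive_indefinite_description _ (proj2 (proj2 (H2 rho)))).
have mmP rho : (forall x, sigma x -> 0 <= pairing (mm rho) x) /\
    (forall x, (sigma x /\ pairing (mm rho) x = 0) <-> exists t, 0 <= t /\ forall i, x i = t * realvec R (u rho) i).
  exact: (proj2_sig (constructive_indefinite_description _ (proj2 (proj2 (H2 rho))))).
have insig : forall rho, sigma (realvec R (u rho)).
  move=> rho; have [_ /(_ (realvec R (u rho)))] := mmP rho.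
  case=> _ /(_ _) [] //; by exists 1; split => // i; rewrite mul1r.
have nz : forall rho, exists i, realvec R (u rho) i != 0 by move=> rho; exact: (H2 rho).2.1.
have [M Mpos] : exists M : 'I_d -> R, forall rho, 0 < pairing M (realvec R (u rho)).
  move: u uinj H2 mm mmP insig nz nr Pi; case: k => [|[|k']] u uinj H2 mm mmP insig nz nr Pi.
  - by exists (fun _ => 0); case.
  - exists (realvec R (u ord0)) => rho; rewrite (ord1 rho).
    by have [i hi] := nz ord0; exact: pairing_self hi.
  - exists (fun i => \sum_r mm r i) => rho; rewrite pairing_sum.
    pose r0x : 'I_k'.+2 := if rho == ord0 then ord_max else ord0.
    have rrho : r0x != rho.
      rewrite /r0x; case: (eqVneq rho ord0) => [e|ne]; first by rewrite e. by rewrite eq_sym.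
    rewrite (bigD1 r0x) //=.
    have h2 : 0 <= \sum_(j < k'.+2 | j != r0x) pairing (mm j) (realvec R (u rho)).
      by apply: sumr_ge0 => j _; apply: (mmP j).1; exact: insig.
    suff h1 : 0 < pairing (mm r0x) (realvec R (u rho)) by lra.
    rewrite lt_def (mmP r0x).1 ?insig // andbT; apply/eqP => h0.
    have [/(_ (conj (insig rho) h0)) [t [t0 ht]] _] := (mmP r0x).2 (realvec R (u rho)).
    have [i hi] := nz r0x.
    have [i' hi'] := nz rho.
    have tpos : 0 < t.
      rewrite lt_def t0 andbT; apply/eqP => t00; move: hi'; rewrite ht t00 mul0r.
      by rewrite eqxx.
    have uri : u r0x i != 0 by apply: contra hi; rewrite /realvec => /eqP ->.
    have E : forall j, (u rho j)%:~R = t * (u r0x j)%:~R :> R by move=> j; exact: ht.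
    have eqf : u rho = u r0x.
      apply: functional_extensionality.
      apply: (@prim_int d (u r0x) (u rho) i (H2 r0x).1 (H2 rho).1 uri).
        rewrite -(ltr0z R) intrM E; rewrite -mulrA; apply: mulr_gt0 => //.
        by rewrite -intrM ltr0z -expr2 exprn_even_gt0.
      move=> j; apply: (@intr_inj R); rewrite !intrM !E; ring.
    by move: rrho; rewrite (uinj _ _ eqf) eqxx.
split; last first.
  case=> m hm; exists m => rho; move: (hm rho); case: ifP => // _ h; exact: ltW.
case=> m hm.
pose P rho := pairing M (realvec R (u rho)).
pose s rho := - (nr rho)%:~R - pairing m (realvec R (u rho)).
pose S := \sum_(rho in Pi) P rho / s rho.
have spos : forall rho, rho \in Pi -> 0 < s rho.
  by move=> rho hr; move: (hm rho); rewrite hr /s subr_gt0.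
have S0 : 0 <= S.
  apply: sumr_ge0 => rho hr; apply: divr_ge0; [exact: ltW (Mpos rho)| exact: ltW (spos _ hr)].
pose e := (1 + S)^-1.
have e0 : 0 < e by rewrite invr_gt0; lra.
have eS : e * (1 + S) = 1 by rewrite mulVf //; apply/eqP => h; lra.
exists (fun i => m i + e * M i) => rho.
rewrite pairingD pairingZ; move: (hm rho); case: ifP => hr h.
- have sp := spos _ hr.
  have qS : P rho / s rho <= S.
    rewrite /S (bigD1 rho) //= lerDl; apply: sumr_ge0 => j /andP [hj _].
    apply: divr_ge0; [exact: ltW (Mpos j)| exact: ltW (spos _ hj)].
  have qs : P rho / s rho * s rho = P rho by rewrite divfK // gt_eqF.
  have h1 : e * (P rho / s rho) * s rho <= e * S * s rho.
    by rewrite ler_pM2r // ler_pM2l.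
  have h2 : e * S < 1 by lra.
  have h3 : e * S * s rho < s rho by rewrite gtr_pMl.
  rewrite -mulrA qs in h1.
  rewrite /P /s in h1 h3 *; lra.
- have := mulr_gt0 e0 (Mpos rho).
  rewrite /P; lra.
Qed.
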